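(* Suppose $s\in S$ is an element all of whose monomials have degree $0$ modulo $\vec c$ (i.e.\ degree in $\mathbb{Z}\vec c\subset L$). Then the non-constant terms of $s$ lie in the ideal $(x^{pq-1},x^py,xy^q,y^{pq-1})$.
   Context: Let $p,q\ge2$ be integers. Let $L$ be the abelian group generated by $\vec x,\vec y,\vec c$ modulo $p\vec x+\vec y=\vec x+q\vec y=\vec c$, and let $S=\mathbb{C}[x,y]$ be $L$-graded with $\deg x=\vec x$, $\deg y=\vec y$. *)

(* Defs.v *)
From mathcomp Require Import all_boot all_algebra.
From mathcomp Require Import Rstruct.
From mathcomp.real_closed Require Import complex.
From mathcomp Require Import mpoly.
Set Implicit Arguments. Unset Strict Implicit. Unset Printing Implicit Defensive.
Import GRing.Theory.
Local Open Scope ring_scope.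

Notation CC := (complex Rdefinitions.R).

(* The group L = Z x_vec + Z y_vec + Z c_vec modulo the relations
   p x + y = c and x + q y = c.  An element a x + b y + k c is represented by
   the triple (a, b, k) : int * int * int; two triples represent the same
   element of L iff their difference lies in the subgroup generated by the
   relation vectors (p, 1, -1) and (1, q, -1). *)
Definition Lrep := (int * int * int)%type.

Definition L_eq (p q : nat) (u v : Lrep) : Prop :=
  exists m n : int,
    [/\ u.1.1 - v.1.1 = m * p%:Z + n,
        u.1.2 - v.1.2 = m + n * q%:Z
      & u.2 - v.2 = - m - n].

Definition mdeg (mon : 'X_{1.. 2}) : Lrep :=
  ((mon 0%R)%:Z, (mon 1%R)%:Z, 0%:Z).

Definition deg_in_Zc (p q : nat) (mon : 'X_{1.. 2}) : Prop :=
  exists k : int, L_eq p q (mdeg mon) (0%:Z, 0%:Z, k).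

Definition xS : {mpoly CC[2]} := 'X_0.
Definition yS : {mpoly CC[2]} := 'X_1.

Definition in_ideal_J (p q : nat) (f : {mpoly CC[2]}) : Prop :=
  exists f1 f2 f3 f4 : {mpoly CC[2]},
    f = f1 * xS ^+ (p * q - 1) + f2 * (xS ^+ p * yS)
        + f3 * (xS * yS ^+ q) + f4 * yS ^+ (p * q - 1).

Notation mon2 := ('X_{1.. 2}).
Definition nonconst_part (s : {mpoly CC[2]}) : {mpoly CC[2]} :=
  s - (s@_0)%:MP.

(* Main.v *)
Require Import Defs.
From mathcomp Require Import all_boot all_algebra.
From mathcomp Require Import Rstruct.
From mathcomp.real_closed Require Import complex.
From mathcomp Require Import mpoly.
From mathcomp Require Import zify ring.
Local Open Scope ring_scope.
Import GRing.Theory.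

Lemma arith (p q a b : nat) (m n : int) : (2 <= p)%N -> (2 <= q)%N ->
  a%:Z = m * p%:Z + n -> b%:Z = m + n * q%:Z -> (0 < a + b)%N ->
  [\/ (p * q - 1 <= a)%N, (p <= a)%N && (1 <= b)%N, (1 <= a)%N && (q <= b)%N | (p*q - 1 <= b)%N].
Proof.
move=> hp hq ha hb hab.
have e1 : a%:Z * q%:Z - b%:Z = m * (p%:Z * q%:Z - 1) by rewrite ha hb; ring.
have e2 : b%:Z * p%:Z - a%:Z = n * (p%:Z * q%:Z - 1) by rewrite ha hb; ring.
have hP : 3 <= p%:Z * q%:Z - 1 by nia.
have [a0|apos] := eqVneq a 0%N.
  subst a. constructor 4. have hm : m <= -1 by nia.
  have : p%:Z * q%:Z - 1 <= b%:Z by nia. lia.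
have [b0|bpos] := eqVneq b 0%N.
  subst b. constructor 1. have hm : n <= -1 by nia.
  have : p%:Z * q%:Z - 1 <= a%:Z by nia. lia.
have [pa|ap] := leqP p a. constructor 2; lia.
have [qb|bq] := leqP q b. constructor 3; lia.
exfalso. have h1 : 0 < m by nia. have h2 : m < 1 by nia. lia.
Qed.

Lemma ideal0 p q : in_ideal_J p q 0.
Proof. by exists 0, 0, 0, 0; rewrite !mul0r !addr0. Qed.

Lemma add8 (V : zmodType) (a b c d e f g h : V) :
  a + b + c + d + (e + f + g + h) = (a + e) + (b + f) + (c + g) + (d + h).
Proof. by rewrite addrACA; congr (_ + _); rewrite addrACA; congr (_ + _); rewrite addrACA. Qed.

Lemma idealD p q f g : in_ideal_J p q f -> in_ideal_J p q g -> in_ideal_J p q (f + g).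
Proof.
move=> [f1 [f2 [f3 [f4 ->]]]] [g1 [g2 [g3 [g4 ->]]]].
exists (f1 + g1), (f2 + g2), (f3 + g3), (f4 + g4); rewrite !mulrDl.
exact: add8.
Qed.

Lemma ideal_mul (p q : nat) (c : CC) (m g : mon2) :
  (g <= m)%MM -> c *: 'X_[m] = (c *: 'X_[m - g]) * 'X_[g] :> {mpoly CC[2]}.
Proof. by move=> hg; rewrite -scalerAl -mpolyXD submK. Qed.

Lemma mono_in (p q : nat) (hp : (2 <= p)%N) (hq : (2 <= q)%N) (m : mon2) (c : CC) :
  m != 0%MM -> deg_in_Zc p q m -> in_ideal_J p q (c *: 'X_[m]).
Proof.
rewrite /deg_in_Zc /L_eq /mdeg /= => m0 [k [i [j [ha hb _]]]].
rewrite subr0 in ha; rewrite subr0 in hb.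
have i0 : (0%R : 'I_2) = ord0 by apply: val_inj.
have i1 : (1%R : 'I_2) = ord_max by apply: val_inj.
rewrite i0 i1 in ha hb.
have hab : (0 < m ord0 + m ord_max)%N.
  rewrite lt0n; apply: contra m0 => /eqP h; apply/eqP/mnmP => t.
  rewrite mnm0E; case: t => [[|[|//]] ht].
    have -> : Ordinal ht = ord0 by apply: val_inj.
    lia.
  have -> : Ordinal ht = ord_max by apply: val_inj.
  lia.
have hx : forall e : nat, (xS ^+ e) = 'X_[U_(ord0) *+ e] :> {mpoly CC[2]}.
  by move=> e; rewrite /xS mpolyXn i0.
have hy : forall e : nat, (yS ^+ e) = 'X_[U_(ord_max) *+ e] :> {mpoly CC[2]}.
  by move=> e; rewrite /yS mpolyXn i1.
have le2 : forall g : mon2, (g ord0 <= m ord0)%N -> (g ord_max <= m ord_max)%N -> (g <= m)%MM.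
  move=> g h1 h2; apply/mnm_lepP => t; case: t => [[|[|//]] ht].
    by have -> : Ordinal ht = ord0 by apply: val_inj.
  by have -> : Ordinal ht = ord_max by apply: val_inj.
case: (@arith p q _ _ i j hp hq ha hb hab) => [h|/andP[h1 h2]|/andP[h1 h2]|h].
- exists (c *: 'X_[m - U_(ord0) *+ (p*q-1)]), 0, 0, 0.
  rewrite !mul0r !addr0 hx; apply: ideal_mul => //; apply: le2;
  by rewrite mulmnE !mnm1E /=; lia.
- exists 0, (c *: 'X_[m - (U_(ord0) *+ p + U_(ord_max))]), 0, 0.
  rewrite !mul0r add0r !addr0 hx /yS -i1 -mpolyXD; apply: ideal_mul => //; apply: le2;
  by rewrite mnmDE mulmnE !mnm1E /=; lia.
- exists 0, 0, (c *: 'X_[m - (U_(ord0) + U_(ord_max) *+ q)]), 0.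
  rewrite !mul0r !add0r !addr0 hy /xS -i0 -mpolyXD; apply: ideal_mul => //; apply: le2;
  by rewrite mnmDE mulmnE !mnm1E /=; lia.
- exists 0, 0, 0, (c *: 'X_[m - U_(ord_max) *+ (p*q-1)]).
  rewrite !mul0r !add0r hy; apply: ideal_mul => //; apply: le2;
  by rewrite mulmnE !mnm1E /=; lia.
Qed.

Theorem lemma2p3 (p q : nat) (hp : (2 <= p)%N) (hq : (2 <= q)%N)
  (s : {mpoly CC[2]}) :
  (forall mon : mon2, mon \in msupp s -> deg_in_Zc p q mon) ->
  in_ideal_J p q (nonconst_part s).
Proof.
move=> H; rewrite /nonconst_part {1 2}(mpolyE s).
elim: (msupp s) H => [|a r IH] H.
  by rewrite big_nil mcoeff0 mpolyC0 subr0; apply: ideal0.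
rewrite big_cons mcoeffD mpolyCD opprD addrACA; apply: idealD; last first.
  by apply: IH => mon hm; apply: H; rewrite inE hm orbT.
rewrite mcoeffZ mcoeffX.
case: eqP => [->|a0].
  by rewrite mulr1 mpolyX0 -alg_mpolyC subrr; apply: ideal0.
rewrite mulr0 mpolyC0 subr0; apply: mono_in => //; first by apply/eqP.
by apply: H; rewrite inE eqxx.
Qed.
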